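(* Let $g,n\ge1$ be integers and $\mathcal{A},\mathcal{B}\in\mathcal{D}_{g,n}$ weight data. (1) If $\mathcal{A}\le\mathcal{B}$, then $G^{(g,\mathcal{A})}\subset G^{(g,\mathcal{B})}$. (2) If $\mathcal{A}$ and $\mathcal{B}$ are in the same chamber, then $G^{(g,\mathcal{A})}=G^{(g,\mathcal{B})}$. (3) If $\mathcal{A}$ and $\mathcal{B}$ are obtained one from the other through a permutation of coordinates, then $G^{(g,\mathcal{A})}$ is isomorphic to $G^{(g,\mathcal{B})}$. (4) If $\mathcal{A}$ and $\mathcal{B}$ are in chambers $Ch_1$ and $Ch_2$ with $[Ch_1]=[Ch_2]$ (i.e. in the same $S_n$-orbit), then $G^{(g,\mathcal{A})}$ is isomorphic to $G^{(g,\mathcal{B})}$.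
   Context: A weight datum is $\mathcal{A}=(a_1,\dots,a_n)$ with $a_i\in\mathbb{Q}\cap(0,1]$ and $2g-2+\sum_i a_i>0$; $\mathcal{D}_{g,n}\subset\mathbb{R}^n$ is the set of weight data; $\mathcal{A}\le\mathcal{B}$ means $a_i\le b_i$ for all $i$. For $S\subseteq\{1,\dots,n\}$ with $2\le|S|\le n$, the wall $w_S$ is the locus $\sum_{i\in S}a_i=1$; chambers are the connected components of the complement in $\mathcal{D}_{g,n}$ of all walls. $S_n$ acts by permuting coordinates, and $[Ch]$ denotes the $S_n$-orbit of a chamber. A $(g,\mathcal{A})$-stable graph is a finite connected graph $G$ (loops and multiple edges allowed) with vertex weight $w:V(G)\to\mathbb{Z}_{\ge0}$ and $n$ legs labelled $1,\dots,n$ attached via $m:\{1,\dots,n\}\to V(G)$, with $b_1(G)+\sum_v w(v)=g$ and $2w(v)-2+|v|_E+|v|_{\mathcal{A}}>0$ for every vertex $v$, where $|v|_E$ is the number of edge half-edges at $v$ (loops counted twice) and $|v|_{\mathcal{A}}=\sum_{m(i)=v}a_i$. The graph complex $G^{(g,\mathcal{A})}$ is the chain complex of rational vector spaces generated by pairs $[\mathbf{G},\omega]$, where $\mathbf{G}$ is a $(g,\mathcal{A})$-stable graph and $\omega$ a total order of its edges, subject to $[\mathbf{G},\omega]=\mathrm{sgn}(\sigma)[\mathbf{G}',\omega']$ whenever there is an isomorphism of $n$-marked weighted graphs $\mathbf{G}\cong\mathbf{G}'$ under which $\omega,\omega'$ differ by $\sigma\in S_{|E(\mathbf{G})|}$;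 it is graded by the number of edges, with differential the signed sum of the contractions of the non-loop edges. *)

(* Defs.v *)
From HB Require Import structures.
From mathcomp Require Import all_boot all_order all_algebra all_fingroup.
From mathcomp Require Import all_classical all_reals topology normedtype.
From mathcomp Require Import Rstruct Rstruct_topology.

Set Implicit Arguments.
Unset Strict Implicit.
Unset Printing Implicit Defensive.

Import Order.TTheory GRing.Theory Num.Theory.

Local Open Scope ring_scope.

Definition weight_datum (g n : nat) (A : 'I_n -> rat) : Prop :=
  (forall i, 0 < A i <= 1) /\ 0 < (2 * g)%:R - 2 + \sum_(i < n) A i.

Definition wle (n : nat) (A B : 'I_n -> rat) : Prop := forall i, A i <= B i.

Definition realR := Rdefinitions.R.

Definition Dreg (g n : nat) : set 'rV[realR]_n :=
  [set x : 'rV[realR]_n | (forall i, 0 < x ord0 i <= 1) /\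
           0 < (2 * g)%:R - 2 + \sum_(i < n) x ord0 i].

Definition walls (n : nat) : set 'rV[realR]_n :=
  [set x : 'rV[realR]_n | exists S : {set 'I_n}, (2 <= #|S|)%N /\ \sum_(i in S) x ord0 i = 1].

Definition chamber_region (g n : nat) : set 'rV[realR]_n :=
  [set x : 'rV[realR]_n | @Dreg g n x /\ ~ @walls n x].

Definition wpt (n : nat) (A : 'I_n -> rat) : 'rV[realR]_n :=
  \row_i (ratr (A i) : realR).

Definition chamber_of (g n : nat) (A : 'I_n -> rat) : set 'rV[realR]_n :=
  connected_component (@chamber_region g n) (wpt A).

Definition perm_pt (n : nat) (s : 'S_n) (x : 'rV[realR]_n) : 'rV[realR]_n :=
  \row_i x ord0 (s i).

Definition perm_set (n : nat) (s : 'S_n) (C : set 'rV[realR]_n)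
  : set 'rV[realR]_n := (perm_pt s @` C)%classic.

(* A raw graph (nv, wt, ends, legs):
   - vertices are 0, ..., nv-1;
   - wt = the list of vertex weights w(v);
   - ends = the list of edges, each given by its two end vertices; the
     position of an edge in this list is its position in the total order
     omega of the edges (the orientation of a pair is irrelevant, see
     [giso] below: edges are unoriented);
   - legs = the list m(1), ..., m(n) of vertices carrying the legs. *)
Definition rgraph : Type := (nat * seq nat * seq (nat * nat) * seq nat)%type.

Definition nv (G : rgraph) : nat := G.1.1.1.
Definition wt (G : rgraph) : seq nat := G.1.1.2.
Definition ends (G : rgraph) : seq (nat * nat) := G.1.2.
Definition legs (G : rgraph) : seq nat := G.2.

Definition wv (G : rgraph) (v : nat) : nat := nth 0%N (wt G) v.
Definition edge (G : rgraph) (j : nat) : nat * nat := nth (0, 0)%N (ends G) j.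
Definition leg (G : rgraph) (i : nat) : nat := nth 0%N (legs G) i.

Definition adj (G : rgraph) : rel 'I_(nv G) :=
  fun u v => has (fun e : nat * nat =>
    ((e.1 == u) && (e.2 == v)) || ((e.1 == v) && (e.2 == u))) (ends G).

Definition valE (G : rgraph) (v : nat) : nat :=
  (count (fun e : nat * nat => e.1 == v) (ends G)
   + count (fun e : nat * nat => e.2 == v) (ends G))%N.

Definition valA (n : nat) (A : 'I_n -> rat) (G : rgraph) (v : nat) : rat :=
  \sum_(i < n | leg G i == v) A i.

Definition wf_graph (n : nat) (G : rgraph) : Prop :=
  [/\ (0 < nv G)%N, size (wt G) = nv G,
      all (fun e : nat * nat => (e.1 < nv G) && (e.2 < nv G))%N (ends G),
      size (legs G) = n /\ all (fun v => v < nv G)%N (legs G) &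
      forall u v : 'I_(nv G), connect (@adj G) u v].

Definition betti1 (G : rgraph) : nat := (size (ends G) + 1 - nv G)%N.

Definition stable (g n : nat) (A : 'I_n -> rat) (G : rgraph) : Prop :=
  [/\ wf_graph n G,
      (betti1 G + sumn (wt G))%N = g &
      forall v, (v < nv G)%N ->
        0 < (2 * wv G v)%:R - 2 + (valE G v)%:R + valA A G v].

Definition gen (g n : nat) (A : 'I_n -> rat) (k : nat) (G : rgraph) : Prop :=
  stable g A G /\ size (ends G) = k.

(* action of a permutation of 'I_m on natural numbers (identity beyond m) *)
Definition pact (m : nat) (s : 'S_m) (v : nat) : nat :=
  if @insub nat (fun x => (x < m)%N) 'I_m v is Some i then val (s i) else v.

(* Isomorphism of n-marked weighted graphs G ~= G' (vertex bijection sv,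
   edge bijection se) under which the edge orders of G and G' differ by the
   permutation se; eps = sgn(se). *)
Definition giso (n : nat) (G G' : rgraph) (eps : rat) : Prop :=
  exists (hv : nv G' = nv G) (he : size (ends G') = size (ends G))
         (sv : 'S_(nv G)) (se : 'S_(size (ends G))),
  [/\ forall v, (v < nv G)%N -> wv G' (pact sv v) = wv G v,
      forall i, (i < n)%N -> leg G' i = pact sv (leg G i),
      forall j, (j < size (ends G))%N ->
        let e := edge G j in
        let e' := edge G' (pact se j) in
        (e' == (pact sv e.1, pact sv e.2)) || (e' == (pact sv e.2, pact sv e.1))
    & eps = (-1) ^+ odd_perm se].

(* Formal Q-linear combinations of graphs (the free vector space)           *)

Definition fsum : Type := seq (rat * rgraph).

Definition coef (x : fsum) (G : rgraph) : rat :=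
  \sum_(p <- x) (if p.2 == G then p.1 else 0).

Definition fscale (c : rat) (x : fsum) : fsum := [seq (c * p.1, p.2) | p <- x].
Definition fsub (x y : fsum) : fsum := x ++ fscale (-1) y.
Definition fgen (G : rgraph) : fsum := [:: (1, G)].

Definition flift (f : rgraph -> fsum) (x : fsum) : fsum :=
  flatten [seq fscale p.1 (f p.2) | p <- x].

(* x is (a representative of) an element of degree k of G^(g,A) *)
Definition inC (g n : nat) (A : 'I_n -> rat) (k : nat) (x : fsum) : Prop :=
  forall G, coef x G != 0 -> gen g A k G.

(* the defining relations [G,w] - sgn(s) [G',w'] of G^(g,A) *)
Definition isorel (g n : nat) (A : 'I_n -> rat) (G G' : rgraph) (eps : rat)
  : Prop := [/\ stable g A G, stable g A G' & giso n G G' eps].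

Definition relv (G G' : rgraph) (eps : rat) : fsum := [:: (1, G); (- eps, G')].

(* x lies in the span of the defining relations of G^(g,A), i.e. x = 0 in
   the quotient G^(g,A) *)
Definition inR (g n : nat) (A : 'I_n -> rat) (x : fsum) : Prop :=
  exists rs : seq (rat * rgraph * rgraph * rat),
    (forall r, r \in rs -> isorel g A r.1.1.2 r.1.2 r.2) /\
    forall G, coef x G =
      coef (flatten [seq fscale r.1.1.1 (relv r.1.1.2 r.1.2 r.2) | r <- rs]) G.

(* contraction of the j-th edge (a,b), a <> b: b is merged into a, vertices
   above b are shifted down, the weight of the new vertex is w(a)+w(b), and
   the remaining edges keep their relative order. *)
Definition contract (G : rgraph) (j : nat) : rgraph :=
  let: (a, b) := edge G j in
  let rl v := unbump b (if v == b then a else v) in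
  ((nv G).-1,
  [seq (wv G (bump b u) + (if bump b u == a then wv G b else 0%N))%N
     | u <- iota 0 (nv G).-1],
  [seq (rl e.1, rl e.2) | e <- take j (ends G) ++ drop j.+1 (ends G)],
  [seq rl v | v <- legs G]).

Definition dgen (G : rgraph) : fsum :=
  [seq ((-1) ^+ j, contract G j)
     | j <- iota 0 (size (ends G)) & (edge G j).1 != (edge G j).2].

Definition dif (x : fsum) : fsum := flift dgen x.

(* G^(g,A) is a subcomplex of G^(g,B): every generator of G^(g,A) is a
   generator of G^(g,B), the induced map G^(g,A) -> G^(g,B) is well defined
   and injective, and its image is closed under the differential. *)
Definition subcomplex (g n : nat) (A B : 'I_n -> rat) : Prop :=
  [/\ forall k x, inC g A k x -> inC g B k x,
      forall k x, inC g A k x -> (inR g A x <-> inR g B x) &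
      forall k x, inC g A k x -> inC g A k.-1 (dif x)].

(* G^(g,A) = G^(g,B): same spaces, same relations (the differential is given
   by the same formula) *)
Definition same_complex (g n : nat) (A B : 'I_n -> rat) : Prop :=
  (forall k x, inC g A k x <-> inC g B k x) /\
  (forall x, inR g A x <-> inR g B x).

Definition chain_map (g n : nat) (A B : 'I_n -> rat) (f : rgraph -> fsum)
  : Prop :=
  [/\ forall k G, gen g A k G -> inC g B k (f G),
      forall k x, inC g A k x -> inR g A x -> inR g B (flift f x) &
      forall k G, gen g A k G -> inR g B (fsub (flift f (dgen G)) (dif (f G)))].

Definition complex_iso (g n : nat) (A B : 'I_n -> rat) : Prop :=
  exists (f : rgraph -> fsum) (h : rgraph -> fsum),
  [/\ chain_map g A B f, chain_map g B A h,
      forall k G, gen g A k G -> inR g A (fsub (flift h (f G)) (fgen G)) &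
      forall k G, gen g B k G -> inR g B (fsub (flift f (h G)) (fgen G))].

(* Main.v *)
From Pilot Require Import Defs.
From mathcomp Require Import all_boot all_order all_algebra all_fingroup.
From mathcomp Require Import all_classical all_reals topology normedtype.
From mathcomp Require Import Rstruct Rstruct_topology.
From HB Require Import structures.
From mathcomp Require Import lra zify.
Set Implicit Arguments.
Unset Strict Implicit.
Unset Printing Implicit Defensive.
Import Order.TTheory GRing.Theory Num.Theory.
Import numFieldNormedType.Exports.
Local Open Scope ring_scope.
Local Notation grph := Pilot.Defs.rgraph.
Local Notation contract := Pilot.Defs.contract.

Lemma coef_nil G : coef [::] G = 0.
Proof. by rewrite /coef big_nil. Qed.

Lemma coef_cons p x G : coef (p :: x) G = (if p.2 == G then p.1 else 0) + coef x G.
Proof. by rewrite /coef big_cons. Qed.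

Lemma coef_cat x y G : coef (x ++ y) G = coef x G + coef y G.
Proof. by rewrite /coef big_cat. Qed.

Lemma coef_fscale c x G : coef (fscale c x) G = c * coef x G.
Proof.
rewrite /coef big_map mulr_sumr; apply: eq_bigr => p _ /=.
by case: ifP; rewrite ?mulr0.
Qed.

Lemma coef_fgen H G : coef (fgen H) G = if H == G then 1 else 0.
Proof. by rewrite coef_cons coef_nil addr0. Qed.

Lemma coef_fsub x y G : coef (fsub x y) G = coef x G - coef y G.
Proof. by rewrite /fsub coef_cat coef_fscale mulN1r. Qed.

Lemma coef_flatten (T : Type) (F : T -> fsum) rs G :
  coef (flatten (map F rs)) G = \sum_(r <- rs) coef (F r) G.
Proof.
elim: rs => [|r rs IH]; first by rewrite big_nil coef_nil.
by rewrite /= coef_cat IH big_cons.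
Qed.

Lemma coef_flift f x G : coef (flift f x) G = \sum_(p <- x) p.1 * coef (f p.2) G.
Proof. by rewrite /flift coef_flatten; apply: eq_bigr => p _; rewrite coef_fscale. Qed.

Lemma sum_zero (F : grph -> rat) x : (forall G, coef x G = 0) ->
  \sum_(p <- x) p.1 * F p.2 = 0.
Proof.
elim: {x}(size x).+1 {-2}x (ltnSn (size x)) => // m IH [|p x] sz h.
  by rewrite big_nil.
rewrite (bigID (fun q : rat * grph => q.2 == p.2)) /=.
have -> : \sum_(q <- p :: x | q.2 == p.2) q.1 * F q.2 =
          (\sum_(q <- p :: x | q.2 == p.2) q.1) * F p.2.
  by rewrite mulr_suml; apply: eq_bigr => q /eqP ->.
have -> : \sum_(q <- p :: x | q.2 == p.2) q.1 = coef (p :: x) p.2.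
  by rewrite /coef big_mkcond.
rewrite h mul0r add0r -big_filter; apply: IH.
  rewrite /= eqxx /= size_filter; apply: leq_ltn_trans (count_size _ _) _; exact: sz.
move=> G; rewrite /coef big_filter big_mkcond /=.
have [->|nG] := eqVneq G p.2.
  by apply: big1 => q _; case: ifP => // /negbTE ->.
transitivity (coef (p :: x) G); last exact: h.
rewrite /coef; apply: eq_bigr => q _.
by case: ifP => // /negbFE /eqP ->; rewrite eq_sym (negbTE nG).
Qed.

Lemma sum_equiv (F : grph -> rat) x y : (forall G, coef x G = coef y G) ->
  \sum_(p <- x) p.1 * F p.2 = \sum_(p <- y) p.1 * F p.2.
Proof.
move=> h; apply/eqP; rewrite -subr_eq0; apply/eqP.
have e : \sum_(p <- fsub x y) p.1 * F p.2 =
    \sum_(p <- x) p.1 * F p.2 - \sum_(p <- y) p.1 * F p.2.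
  rewrite /fsub big_cat big_map /= -sumrN; congr (_ + _).
  by apply: eq_bigr => p _ /=; rewrite mulN1r mulNr.
rewrite -e; apply: sum_zero => G.
by rewrite coef_fsub h subrr.
Qed.

Lemma sum_supp (F : grph -> rat) x : (forall G, coef x G != 0 -> F G = 0) ->
  \sum_(p <- x) p.1 * F p.2 = 0.
Proof.
move=> h; rewrite (bigID (fun p : rat * grph => F p.2 == 0)) /=.
rewrite big1 ?add0r; last by move=> p /eqP ->; rewrite mulr0.
rewrite -big_filter; apply: sum_zero => G.
rewrite /coef big_filter big_mkcond /=.
have [FG|FG] := eqVneq (F G) 0.
  apply: big1 => q _; case: (eqVneq q.2 G) => [->|qG]; first by rewrite FG eqxx.
  by case: ifP => // _; rewrite (negbTE qG).
transitivity (coef x G).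
  rewrite /coef; apply: eq_bigr => q _.
  case: (eqVneq q.2 G) => [->|qG]; first by rewrite FG /= ?eqxx.
  by case: ifP => // _; rewrite (negbTE qG).
by apply/eqP; apply: contraR FG => cG; apply/eqP; exact: h.
Qed.

Lemma inR0 g n (A : 'I_n -> rat) x : (forall G, coef x G = 0) -> inR g A x.
Proof. by move=> h; exists [::]; split => // G; rewrite h coef_nil. Qed.

Lemma coef_flift_equiv f x y : (forall G, coef x G = coef y G) ->
  forall G, coef (flift f x) G = coef (flift f y) G.
Proof. by move=> h G; rewrite !coef_flift; exact: (sum_equiv (fun H => coef (f H) G)). Qed.

Section Pact.
Variables (m : nat) (s : 'S_m).

Lemma pactE v (h : (v < m)%N) : pact s v = s (Ordinal h).
Proof. by rewrite /pact insubT. Qed.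

Lemma pact_ord (i : 'I_m) : pact s i = s i.
Proof. by rewrite (pactE (ltn_ord i)); congr (val (s _)); apply: val_inj. Qed.

Lemma pact_out v : ~~ (v < m)%N -> pact s v = v.
Proof. by move=> h; rewrite /pact insubN. Qed.

Lemma pact_lt v : (pact s v < m)%N = (v < m)%N.
Proof.
case: (ltnP v m) => h; first by rewrite (pactE h) ltn_ord.
by rewrite (pact_out (negbT (leq_gtF h))) ltnNge h.
Qed.

Lemma pact_inj : injective (pact s).
Proof.
move=> u v; case: (ltnP u m) => hu; case: (ltnP v m) => hv.
- by rewrite (pactE hu) (pactE hv) => /val_inj /perm_inj [].
- by rewrite (pactE hu) (pact_out (negbT (leq_gtF hv))) => e; move: (ltn_ord (s (Ordinal hu))); rewrite e ltnNge hv.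
- by rewrite (pactE hv) (pact_out (negbT (leq_gtF hu))) => e; move: (ltn_ord (s (Ordinal hv))); rewrite -e ltnNge hu.
- by rewrite (pact_out (negbT (leq_gtF hu))) (pact_out (negbT (leq_gtF hv))).
Qed.

End Pact.

Lemma pactK m (s : 'S_m) v : pact s^-1 (pact s v) = v.
Proof.
case: (ltnP v m) => h; last by have h' := negbT (leq_gtF h); rewrite !(pact_out _ h').
by rewrite (pactE s h) pact_ord permK.
Qed.

Lemma pactKV m (s : 'S_m) v : pact s (pact s^-1 v) = v.
Proof.
case: (ltnP v m) => h; last by have h' := negbT (leq_gtF h); rewrite !(pact_out _ h').
by rewrite (pactE s^-1 h) pact_ord permKV.
Qed.

Definition hv (v : nat) (e : nat * nat) : nat := ((e.1 == v) + (e.2 == v))%N.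

Lemma cnt_sum (s : seq (nat * nat)) v :
  (count (fun e : nat * nat => e.1 == v) s + count (fun e : nat * nat => e.2 == v) s)%N
  = (\sum_(e <- s) hv v e)%N.
Proof.
elim: s => [|e s IH]; first by rewrite big_nil.
by rewrite big_cons /= addnACA IH.
Qed.

Lemma valE_sum G v : valE G v = (\sum_(j < size (ends G)) hv v (edge G j))%N.
Proof. by rewrite /valE cnt_sum (big_nth (0,0)%N) big_mkord. Qed.

Definition Qc n (A : 'I_n -> rat) G v :=
  0 < (2 * wv G v)%:R - 2 + (valE G v)%:R + valA A G v.

Lemma giso_map n G G' eps : giso n G G' eps ->
  exists (f : nat -> nat),
  (forall v, (v < nv G)%N -> [/\ (f v < nv G')%N, wv G' (f v) = wv G v,
       valE G' (f v) = valE G v & forall A : 'I_n -> rat, valA A G' (f v) = valA A G v]) /\ (forall v', (v' < nv G')%N -> exists2 v, (v < nv G)%N & v' = f v).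
Proof.
case=> hV [he [sv [se [Hw Hl He _]]]]; exists (pact sv); split; last first.
  move=> v' lt; exists (pact sv^-1 v'); first by rewrite pact_lt -hV.
  by rewrite pactKV.
move=> v lv; split.
- by rewrite hV pact_lt.
- exact: Hw.
- rewrite !valE_sum.
  rewrite -(big_mkord xpredT (fun j => hv (pact sv v) (edge G' j))) he big_mkord.
  rewrite (reindex_inj (@perm_inj _ se)); apply: eq_bigr => j _.
  move: (He j (ltn_ord j)); rewrite /= pact_ord => /orP [] /eqP ->;
    by rewrite /hv /= !(inj_eq (@pact_inj _ sv)) // addnC.
- by move=> A; rewrite /valA; apply: eq_bigl => i; rewrite Hl // (inj_eq (@pact_inj _ sv)).
Qed.

Lemma stable_iso g n (A B : 'I_n -> rat) G G' eps : giso n G G' eps ->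
  stable g B G -> stable g B G' -> (stable g A G <-> stable g A G').
Proof.
move=> /giso_map [f [Hf Hs]] [wf bt _] [wf' bt' _]; split.
  case=> _ _ HQ; split => // v' /Hs [v lv ->].
  by have [_ -> -> ->] := Hf v lv; exact: HQ.
case=> _ _ HQ; split => // v lv.
by have [lf <- <- <-] := Hf v lv; exact: HQ.
Qed.

Lemma no_isolated g n G v : wf_graph n G -> (betti1 G + sumn (wt G))%N = g ->
  (1 <= g)%N -> (v < nv G)%N -> wv G v = 0%N -> valE G v = 0%N -> False.
Proof.
case=> nv0 swt ende [slg lgs] conn bt g1 lv wv0 vE0.
have cnt1 : count (fun e : nat * nat => e.1 == v) (ends G) = 0%N.
  by move: vE0; rewrite /valE; case: (count _ _).
have cnt2 : count (fun e : nat * nat => e.2 == v) (ends G) = 0%N.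
  by move: vE0; rewrite /valE; case: (count _ _) => //= ?; case: (count _ _).
case: (ltnP 1 (nv G)) => hn.
  pose u := if v == 0%N then 1%N else 0%N.
  have lu : (u < nv G)%N by rewrite /u; case: ifP.
  have uv : u != v by rewrite /u; case: (eqVneq v 0%N) => [->|] //; rewrite eq_sym.
  have := conn (Ordinal lv) (Ordinal lu).
  case/connectP => -[|x p] /=.
    by move=> _ /(congr1 val) /= e; move: uv; rewrite e eqxx.
  case/andP => hx _ _; move: hx; rewrite /adj => /hasP [e ee] /orP [] /andP [/eqP e1 /eqP e2].
    move/eqP: cnt1; rewrite -leqn0 leqNgt -has_count; case/negP.
    by apply/hasP; exists e => //; rewrite e1.
  move/eqP: cnt2; rewrite -leqn0 leqNgt -has_count; case/negP.
  by apply/hasP; exists e => //; rewrite e2.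
have nv1 : nv G = 1%N by apply/eqP; rewrite eqn_leq hn.
have v0 : v = 0%N by move: lv; rewrite nv1; case: (v) => [|[]].
have e0 : ends G = [::].
  case E: (ends G) => [|e es] //.
  move/eqP: cnt1; rewrite -leqn0 leqNgt -has_count; case/negP.
  apply/hasP; exists e; first by rewrite E mem_head.
  move/allP: ende => /(_ e); rewrite E mem_head nv1 => /(_ isT) /andP [].
  by rewrite v0; case: (e.1).
have wt0 : wt G = [:: 0%N].
  move: swt wv0; rewrite nv1 v0 /wv; case: (wt G) => [|w [|]] //= _ ->.
  by [].
move: bt; rewrite /betti1 e0 nv1 wt0 /= => eg.
by move: g1; rewrite -eg.
Qed.

Lemma valA_set n (A : 'I_n -> rat) G v :
  valA A G v = \sum_(i in [set i : 'I_n | leg G i == v]) A i.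
Proof. by rewrite /valA; apply: eq_bigl => i; rewrite inE. Qed.

Lemma sig_ge0 n (A : 'I_n -> rat) (S : {set 'I_n}) :
  (forall i, 0 < A i <= 1) -> 0 <= \sum_(i in S) A i.
Proof. by move=> h; apply: sumr_ge0 => i _; case/andP: (h i) => /ltW. Qed.

Lemma sig_le n (A : 'I_n -> rat) (S : {set 'I_n}) :
  (forall i, 0 < A i <= 1) -> \sum_(i in S) A i <= #|S|%:R.
Proof.
move=> h; rewrite -sumr_const; apply: ler_sum => i _.
by case/andP: (h i).
Qed.

Lemma sig_pos n (A : 'I_n -> rat) (S : {set 'I_n}) :
  (forall i, 0 < A i <= 1) -> (0 < \sum_(i in S) A i) = (0 < #|S|)%N.
Proof.
move=> h; case: (posnP #|S|) => [/eqP|] hS.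
  by rewrite cards_eq0 in hS; rewrite (eqP hS) big_set0 ltxx.
case/card_gt0P: hS => i iS; rewrite (bigD1 i) //=.
have := @sig_ge0 n A (S :\ i) h; rewrite (eq_bigl (fun j => (j \in S) && (j != i))).
  by case/andP: (h i) => hi _ h2; apply: ltr_pwDl.
by move=> j; rewrite !inE andbC.
Qed.

Lemma stable_transfer g n (A B : 'I_n -> rat) G : (1 <= g)%N ->
  (forall i, 0 < A i <= 1) -> (forall i, 0 < B i <= 1) ->
  (forall S : {set 'I_n}, (2 <= #|S|)%N -> 1 < \sum_(i in S) A i -> 1 < \sum_(i in S) B i) ->
  stable g A G -> stable g B G.
Proof.
move=> g1 hA hB hS [wf bt HQ]; split=> // v lv; have := HQ v lv.
rewrite !valA_set; set S := [set i : 'I_n | leg G i == v].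
have E : forall X : rat, (2 * wv G v)%:R - 2 + (valE G v)%:R + X = ((2 * wv G v + valE G v)%N%:R - 2 + X).
  by move=> X; rewrite natrD; lra.

rewrite !E.
case Ek: (2 * wv G v + valE G v)%N => [|[|[|k]]].
- exfalso; move/eqP: Ek; rewrite addn_eq0 muln_eq0 /= => /andP [/eqP w0 /eqP e0].
  exact: (no_isolated wf bt g1 lv w0 e0).
- move=> h1.
  have h1' : 1 < \sum_(i in S) A i by lra.
  have S2 : (2 <= #|S|)%N.
    rewrite ltnNge; apply/negP => hle.
    have := sig_le S hA; have : (#|S|%:R <= 1 :> rat) by rewrite -[X in _ <= X]/(1%:R : rat) ler_nat.
    lra.
  have := hS S S2 h1'; lra.
- move=> h2.
  have : 0 < \sum_(i in S) A i by lra.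
  rewrite sig_pos // -(sig_pos _ hB) => h3; lra.
- move=> _; have := sig_ge0 S hB; rewrite -addn3 natrD.
  have : (0 <= k%:R :> rat) by rewrite ler0n.
  lra.
Qed.


Definition rl (a b v : nat) : nat := unbump b (if v == b then a else v).

Lemma unbump_eq b y u : y != b -> (unbump b y == u) = (y == bump b u).
Proof.
move=> yb; apply/eqP/eqP => [<-|->]; last exact: bumpK.
by rewrite unbumpK // inE.
Qed.

Lemma rl_eq a b x u : a != b ->
  (rl a b x == u) = (x == bump b u) || ((x == b) && (a == bump b u)).
Proof.
move=> ab; rewrite /rl; case: (eqVneq x b) => [->|xb] /=.
  by rewrite unbump_eq // (negbTE (neq_bump b u)).
by rewrite unbump_eq // orbF.
Qed.

Lemma rl_nat a b x u : a != b ->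
  nat_of_bool (rl a b x == u) = ((x == bump b u) + (x == b) * (a == bump b u))%N.
Proof.
move=> ab; rewrite rl_eq //; case: (eqVneq x b) => [->|xb].
  by have := neq_bump b u; case: (b == bump b u); case: (a == bump b u).
by case: (x == bump b u); case: (a == bump b u).
Qed.

Lemma unbump_lt N (b y : nat) : (b < N)%N -> (y < N)%N -> y != b -> (unbump b y < N.-1)%N.
Proof. move=> h0 h2 /eqP h3; rewrite /unbump; case: (ltnP b y) => h1 /=; lia. Qed.

Lemma rl_lt N a b x : (b < N)%N -> (x < N)%N -> (a < N)%N -> a != b -> (rl a b x < N.-1)%N.
Proof.
move=> bN xN aN ab; rewrite /rl; case: (eqVneq x b) => [_|xb] /=; exact: unbump_lt.
Qed.

Lemma contract_eq G j a b : edge G j = (a, b) ->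
  contract G j = ((nv G).-1,
  [seq (wv G (bump b u) + (if bump b u == a then wv G b else 0%N))%N
     | u <- iota 0 (nv G).-1],
  [seq (rl a b e.1, rl a b e.2) | e <- take j (ends G) ++ drop j.+1 (ends G)],
  [seq rl a b v | v <- legs G]).
Proof. by rewrite /contract => ->. Qed.

Section Contract.
Variables (g n : nat) (A : 'I_n -> rat) (G : grph) (j a b : nat).
Hypotheses (wf : wf_graph n G) (jm : (j < size (ends G))%N) (Ee : edge G j = (a, b))
  (ab : a != b).

Let rest := take j (ends G) ++ drop j.+1 (ends G).
Let H := contract G j.

Lemma ends_split : ends G = take j (ends G) ++ (a, b) :: drop j.+1 (ends G).
Proof. by rewrite -Ee /edge -drop_nth // cat_take_drop. Qed.

Lemma ab_lt : (a < nv G)%N /\ (b < nv G)%N.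
Proof.
case: wf => _ _ /allP ende _ _.
have : (a, b) \in ends G by rewrite -Ee /edge mem_nth.
by move/ende => /andP.
Qed.

Lemma nvH : nv H = (nv G).-1.
Proof. by rewrite /H (contract_eq Ee). Qed.

Lemma endsH : ends H = [seq (rl a b e.1, rl a b e.2) | e <- rest].
Proof. by rewrite /H (contract_eq Ee). Qed.

Lemma legsH : legs H = [seq rl a b v | v <- legs G].
Proof. by rewrite /H (contract_eq Ee). Qed.

Lemma wtH : wt H = [seq (wv G (bump b u) + (if bump b u == a then wv G b else 0%N))%N
     | u <- iota 0 (nv G).-1].
Proof. by rewrite /H (contract_eq Ee). Qed.

Lemma valE_G v : valE G v = (\sum_(e <- rest) hv v e + hv v (a, b))%N.
Proof.
rewrite /valE cnt_sum {1}ends_split /rest !big_cat big_cons /=.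
lia.
Qed.

Lemma valE_H u : (valE H u + 2 * (bump b u == a) =
   valE G (bump b u) + (bump b u == a) * valE G b)%N.
Proof.
rewrite !valE_G /valE cnt_sum endsH big_map.
set c := bump b u.
have -> : (\sum_(e <- rest) hv u (rl a b e.1, rl a b e.2) =
   \sum_(e <- rest) hv c e + (a == c) * \sum_(e <- rest) hv b e)%N.
  rewrite big_distrr -big_split /=; apply: eq_bigr => e _.
  by rewrite /hv /= !rl_nat //; lia.
have bc : (b == c) = false by rewrite /c (negbTE (neq_bump b u)).
rewrite /hv /= bc eqxx (negbTE ab) eq_sym.
by case: (c == a) => /=; lia.
Qed.

Lemma wv_H u : (u < (nv G).-1)%N ->
  wv H u = (wv G (bump b u) + (if bump b u == a then wv G b else 0%N))%N.
Proof.
by move=> lu; rewrite /wv wtH (nth_map 0%N) ?size_iota // nth_iota.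
Qed.

Lemma valA_H u : valA A H u =
  valA A G (bump b u) + (if bump b u == a then valA A G b else 0).
Proof.
case: wf => _ _ _ [slg _] _.
rewrite /valA.
have -> : \sum_(i < n | leg H i == u) A i =
   \sum_(i < n | (leg G i == bump b u) || (leg G i == b) && (a == bump b u)) A i.
  apply: eq_bigl => i; rewrite /leg legsH (nth_map 0%N) ?slg //.
  by rewrite -/(leg G i) rl_eq.
rewrite eq_sym; case: (eqVneq (bump b u) a) => [ca|ca].
  rewrite (bigID (fun i : 'I_n => leg G i == bump b u)) /=; congr (_ + _).
    apply: eq_bigl => i.
    by case: (leg G i == bump b u) (leg G i == b) => [] [].
  apply: eq_bigl => i; have := neq_bump b u.
  case: (eqVneq (leg G i) (bump b u)) => [->|_] /=; last by move=> _; rewrite ?andbT.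
  by rewrite eq_sym => /negbTE.
rewrite addr0; apply: eq_bigl => i.
by case: (leg G i == bump b u) (leg G i == b) => [] [].
Qed.


Lemma size_endsH : size (ends H) = (size (ends G)).-1.
Proof. rewrite endsH size_map size_cat size_take size_drop jm; lia. Qed.

Lemma sumn_H : sumn (wt H) = sumn (wt G).
Proof.
case: wf => _ swt _ _ _; have [aN bN] := ab_lt.
rewrite wtH !sumnE big_map.
rewrite (_ : iota 0 _ = index_iota 0 (nv G).-1); last by rewrite /index_iota subn0.
rewrite big_mkord (big_nth 0%N) swt big_mkord.
rewrite (bigD1_ord (Ordinal bN)) //= big_split /= addnC; congr (_ + _)%N.
have u0lt : (unbump b a < (nv G).-1)%N by apply: unbump_lt.
rewrite (bigD1 (Ordinal u0lt)) //= unbumpK ?inE // eqxx big1 ?addn0 // => u nu.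
case: eqP => // e; case/eqP: nu; apply: val_inj => /=; by rewrite -e bumpK.
Qed.

Lemma connect_map (T T' : finType) (e : rel T) (e' : rel T') (f : T -> T') :
  (forall x y, e x y -> connect e' (f x) (f y)) ->
  forall x y, connect e x y -> connect e' (f x) (f y).
Proof.
move=> h x y /connectP [p]; elim: p x => [|z p IH] x /=.
  by move=> _ ->; exact: connect0.
case/andP => exz pz yl; apply: connect_trans (h _ _ exz) (IH _ pz yl).
Qed.

Lemma rl_ab : rl a b a = rl a b b.
Proof. by rewrite /rl (negbTE ab) eqxx. Qed.

Lemma conn_H : forall u v : 'I_(nv H), connect (@adj H) u v.
Proof.
case: (wf) => _ _ _ _ conn; have [aN bN] := ab_lt.
rewrite /H (contract_eq Ee) /=.
pose phi (x : 'I_(nv G)) : 'I_((nv G).-1) := Ordinal (rl_lt bN (ltn_ord x) aN ab).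
have phiK : forall u : 'I_((nv G).-1), phi (lift (Ordinal bN) u) = u.
  move=> u; apply: val_inj => /=; rewrite /rl eq_sym (negbTE (neq_bump b u)).
  exact: bumpK.
move=> u v; rewrite -(phiK u) -(phiK v); apply: connect_map; last exact: conn.
move=> x y; rewrite /adj {1}ends_split has_cat /= => /orP [hx|/orP [hx|hx]].
- apply: connect1; move/hasP: hx => [e ee pe]; apply/hasP.
  exists (rl a b e.1, rl a b e.2); first by apply: map_f; rewrite mem_cat ee.
  by case/orP: pe => /andP [/eqP -> /eqP ->]; rewrite /= !eqxx ?orbT.
- have -> : phi x = phi y; last exact: connect0.
  apply: val_inj => /=.
  by case/orP: hx => /andP [/eqP <- /eqP <-]; rewrite rl_ab.
- apply: connect1; move/hasP: hx => [e ee pe]; apply/hasP.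
  exists (rl a b e.1, rl a b e.2); first by apply: map_f; rewrite mem_cat ee orbT.
  by case/orP: pe => /andP [/eqP -> /eqP ->]; rewrite /= !eqxx ?orbT.
Qed.

End Contract.

Lemma stable_contract g n (A : 'I_n -> rat) G j : stable g A G ->
  (j < size (ends G))%N -> (edge G j).1 != (edge G j).2 ->
  stable g A (contract G j).
Proof.
case E: (edge G j) => [a b] /= [wf bt HQ] jm ab.
have [aN bN] := ab_lt wf jm E.
have N2 : (1 < nv G)%N by move: ab => /eqP; lia.
case: (wf) => nv0 swt /allP ende [slg /allP lgs] conn.
have restin : forall e, e \in take j (ends G) ++ drop j.+1 (ends G) -> e \in ends G.
  by move=> e; rewrite mem_cat => /orP [/mem_take|/mem_drop].
split.
- split.
  + by rewrite (nvH E); lia.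
  + by rewrite (wtH E) (nvH E) size_map size_iota.
  + rewrite (endsH E) (nvH E); apply/allP => e /mapP [e0 /restin e0in ->] /=.
    by case/andP: (ende _ e0in) => h1 h2; rewrite !(rl_lt bN) // .
  + rewrite (legsH E) size_map slg; split => //; apply/allP => v /mapP [v0 /lgs v0in ->].
    by rewrite (nvH E) (rl_lt bN).
  + exact: (conn_H wf jm E ab).
- rewrite /betti1 (size_endsH jm E ab) (nvH E) (sumn_H wf jm E ab).
  by move: bt; rewrite /betti1; move: jm; lia.
- move=> u; rewrite (nvH E) => lu.
  have lc : (bump b u < nv G)%N by rewrite /bump; case: leqP => /=; lia.
  have eE := valE_H jm E ab u.
  rewrite /Qc (valA_H A wf E ab u) (wv_H E lu).
  case: (eqVneq (bump b u) a) => [ca|ca].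
    move: eE; rewrite ca eqxx /= => eE.
    have eR : (valE (contract G j) u)%:R = (valE G a)%:R + (valE G b)%:R - 2 :> rat.
      move: eE; rewrite mul1n muln1 => eE.
      have := congr1 (fun k : nat => k%:R : rat) eE; rewrite /= !natrD; lra.
    rewrite eR; have := HQ a aN; have := HQ b bN; rewrite /Qc.
    rewrite !natrM !natrD; lra.
  move: eE; rewrite (negbTE ca) /= !addn0 => ->.
  by rewrite addr0; exact: HQ.
Qed.

Lemma coef_dgen_nz G H : coef (dgen G) H != 0 -> exists j,
  [/\ (j < size (ends G))%N, (edge G j).1 != (edge G j).2 & H = contract G j].
Proof.
rewrite /dgen /coef big_map big_filter /=.
case: (boolP (has (fun j => ((edge G j).1 != (edge G j).2) && (contract G j == H))
   (iota 0 (size (ends G))))) => [/hasP [j jin /andP [nl /eqP e]] | /hasPn hn] nz.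
  by exists j; split => //; move: jin; rewrite mem_iota.
exfalso; move: nz; rewrite big1_seq ?eqxx // => j /andP [nl jin].
by have := hn j jin; rewrite nl /= => /negbTE ->.
Qed.

Lemma dif_inC g n (A : 'I_n -> rat) k x : inC g A k x -> inC g A k.-1 (dif x).
Proof.
move=> hx H; rewrite /dif coef_flift => nz.
case: (pselect (exists G, coef x G != 0 /\ coef (dgen G) H != 0)) => [[G [cG cH]]|nE];
  last first.
  exfalso; move: nz; rewrite (@sum_supp (fun G => coef (dgen G) H)) ?eqxx // => G cG.
  by apply/eqP; apply: contraT => cH; exfalso; apply: nE; exists G.
have [st sz] := hx G cG.
have [j [jm nl ->]] := coef_dgen_nz cH.
split; first exact: stable_contract.
move: nl; case E: (edge G j) => [a b] /= ab.
by rewrite (size_endsH jm E ab) sz.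
Qed.

Lemma stable_mono g n (A B : 'I_n -> rat) G : wle A B -> stable g A G -> stable g B G.
Proof.
move=> hAB [wf bt HQ]; split => // v lv; apply: lt_le_trans (HQ v lv) _.
by rewrite lerD2l; apply: ler_sum => i _; exact: hAB.
Qed.

Lemma coef_relv0 c G1 G2 eps G : G1 != G -> G2 != G ->
  coef (fscale c (relv G1 G2 eps)) G = 0.
Proof.
by move=> h1 h2; rewrite coef_fscale /relv !coef_cons coef_nil /= (negbTE h1) (negbTE h2) !add0r mulr0.
Qed.

Lemma part1 g n (A B : 'I_n -> rat) : wle A B -> subcomplex g A B.
Proof.
move=> hAB; split.
- by move=> k x hx G /hx [st sz]; split => //; exact: stable_mono st.
- move=> k x hx; split.
    case=> rs [hr hc]; exists rs; split => // r /hr [s1 s2 gi].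
    by split => //; exact: stable_mono.
  case=> rs [hr hc].
  pose P (r : rat * grph * grph * rat) := `[< stable g A r.1.1.2 >].
  have hP : forall r, r \in rs -> P r -> isorel g A r.1.1.2 r.1.2 r.2.
    move=> r /hr [s1 s2 gi] /asboolP sA; split => //.
    by move: sA; rewrite (stable_iso A gi s1 s2).
  have hnP : forall r, r \in rs -> ~~ P r -> ~ stable g A r.1.1.2 /\ ~ stable g A r.1.2.
    move=> r /hr [s1 s2 gi] /asboolPn sA; split => //.
    by rewrite -(stable_iso A gi s1 s2).
  exists [seq r <- rs | P r]; split.
    by move=> r; rewrite mem_filter => /andP [pr rin]; exact: hP.
  move=> G; case: (pselect (stable g A G)) => sG.
    rewrite hc !coef_flatten big_filter (bigID P) /=.
    rewrite [X in _ + X]big1_seq ?addr0 // => r /andP [nr rin].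
    have [n1 n2] := hnP r rin nr.
    by apply: coef_relv0; apply/eqP => e; [apply: n1|apply: n2]; rewrite e.
  have -> : coef x G = 0.
    by apply/eqP; apply: contraT => /hx [] //.
  rewrite coef_flatten big_filter big1_seq // => r /andP [pr rin].
  have [s1 s2 _] := hP r rin pr.
  by apply: coef_relv0; apply/eqP => e; apply: sG; rewrite -e.
- by move=> k x; exact: dif_inC.
Qed.

Section Ext.
Variables (g n : nat) (B B' : 'I_n -> rat).
Hypothesis hs : forall G, stable g B G <-> stable g B' G.

Lemma gen_ext k G : gen g B k G <-> gen g B' k G.
Proof. by rewrite /gen hs. Qed.

Lemma inC_ext k x : inC g B k x <-> inC g B' k x.
Proof. by split => h G /h; rewrite gen_ext. Qed.

Lemma isorel_ext G G' e : isorel g B G G' e <-> isorel g B' G G' e.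
Proof. by split => -[h1 h2 h3]; split => //; apply/hs. Qed.

Lemma inR_ext x : inR g B x <-> inR g B' x.
Proof.
by split => -[rs [hr hc]]; exists rs; split => // r /hr /isorel_ext.
Qed.

Lemma same_ext : same_complex g B B'.
Proof. by split => [k x|x]; [exact: inC_ext | exact: inR_ext]. Qed.

Lemma chain_ext_r (A : 'I_n -> rat) f : chain_map g A B f -> chain_map g A B' f.
Proof.
case=> h1 h2 h3; split.
- by move=> k G /h1 /inC_ext.
- by move=> k x hx /(h2 _ _ hx) /inR_ext.
- by move=> k G /h3 /inR_ext.
Qed.

Lemma chain_ext_l (A : 'I_n -> rat) f : chain_map g B A f -> chain_map g B' A f.
Proof.
case=> h1 h2 h3; split.
- by move=> k G /gen_ext /h1.
- by move=> k x /inC_ext hx /inR_ext /(h2 _ _ hx).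
- by move=> k G /gen_ext /h3.
Qed.

Lemma iso_ext (A : 'I_n -> rat) : complex_iso g A B -> complex_iso g A B'.
Proof.
case=> f [h [c1 c2 c3 c4]]; exists f, h; split.
- exact: chain_ext_r.
- exact: chain_ext_l.
- exact: c3.
- by move=> k G /gen_ext /c4 /inR_ext.
Qed.
End Ext.

Lemma stable_ext g n (A A' : 'I_n -> rat) G : (forall i, A i = A' i) ->
  stable g A G -> stable g A' G.
Proof.
move=> e [wf bt HQ]; split => // v lv; have := HQ v lv.
by rewrite /valA (eq_bigr _ (fun i _ => e i)).
Qed.

Definition relab n (s : 'S_n) (G : grph) : grph :=
  (nv G, wt G, ends G, mkseq (fun k => leg G (pact s k)) n).

Lemma leg_relab n (s : 'S_n) G (i : 'I_n) : leg (relab s G) i = leg G (s i).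
Proof. by rewrite /leg /relab /= nth_mkseq // pact_ord. Qed.

Lemma relab_stable g n (A : 'I_n -> rat) (s : 'S_n) G :
  stable g A G -> stable g (fun i => A (s i)) (relab s G).
Proof.
case=> -[nv0 swt ende [slg lgs] conn] bt HQ; split => //.
- split => //; split; first by rewrite size_mkseq.
  apply/allP => v /mapP [k]; rewrite mem_iota add0n => kn ->.
  by apply: (allP lgs); apply: mem_nth; rewrite slg pact_lt.
- move=> v lv; have := HQ v lv; rewrite /Qc /valA.
  rewrite [X in _ -> _ < _ + X](eq_bigl (fun i => leg G (s i) == v)); last first.
    by move=> i; rewrite leg_relab.
  by rewrite [X in _ < _ + X -> _](reindex_inj (@perm_inj _ s)).
Qed.

Lemma relab_giso n (s : 'S_n) G G' eps : giso n G G' eps ->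
  giso n (relab s G) (relab s G') eps.
Proof.
case=> hV [he [sv [se [Hw Hl He Hs]]]]; exists hV, he, sv, se; split => //.
by move=> i lt; rewrite /leg /relab /= !nth_mkseq //; apply: Hl; rewrite pact_lt.
Qed.

Lemma relab_contract n (s : 'S_n) G j : size (legs G) = n ->
  contract (relab s G) j = relab s (contract G j).
Proof.
move=> slg; case E: (edge G j) => [a b].
have E' : edge (relab s G) j = (a, b) by [].
rewrite (contract_eq E') (contract_eq E) /relab /=; congr (_, _).
rewrite /mkseq -map_comp; apply/eq_in_map => k; rewrite mem_iota add0n => kn /=.
by rewrite /leg /= (nth_map 0%N) // slg pact_lt.
Qed.

Lemma relabK n (s : 'S_n) G : size (legs G) = n -> relab s^-1 (relab s G) = G.
Proof.
case: G => [[[N W] E] L] /= slg; rewrite /relab /=; congr (_, _).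
rewrite -[RHS](mkseq_nth 0%N) slg; apply/eq_in_map => k; rewrite mem_iota add0n => kn.
by rewrite /leg /= nth_mkseq ?pactKV // pact_lt.
Qed.

Lemma relabKV n (s : 'S_n) G : size (legs G) = n -> relab s (relab s^-1 G) = G.
Proof. by move=> h; rewrite -{1}(invgK s) relabK. Qed.

Definition fmap (phi : grph -> grph) (x : fsum) : fsum := [seq (p.1, phi p.2) | p <- x].

Lemma flift_fgen phi x G :
  coef (flift (fun H => fgen (phi H)) x) G = coef (fmap phi x) G.
Proof.
rewrite coef_flift /coef big_map; apply: eq_bigr => p _.
by rewrite -/(coef _ _) coef_fgen /=; case: ifP; rewrite ?mulr1 ?mulr0.
Qed.

Lemma chain_relab g n (A A' : 'I_n -> rat) (s : 'S_n) :
  (forall G, stable g A G -> stable g A' (relab s G)) ->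
  chain_map g A A' (fun G => fgen (relab s G)).
Proof.
move=> hst; split.
- move=> k G [st sz] H; rewrite coef_fgen.
  case: (eqVneq (relab s G) H) => [<-|] _; last by rewrite eqxx.
  by split; [exact: hst | by []].
- move=> k x hx [rs [hr hc]].
  exists [seq (r.1.1.1, relab s r.1.1.2, relab s r.1.2, r.2) | r <- rs]; split.
    move=> r /mapP [r0 /hr [s1 s2 gi] ->]; split => /=; [exact: hst|exact: hst|].
    exact: relab_giso.
  move=> G; rewrite (coef_flift_equiv _ hc) flift_fgen; congr coef.
  by rewrite /fmap map_flatten -!map_comp; congr flatten; apply: eq_map => r.
- move=> k G [[[_ _ _ [slg _] _] _ _] _]; apply: inR0 => H.
  rewrite coef_fsub flift_fgen /dif /flift /= coef_cat coef_nil coef_fscale mul1r addr0.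
  suff -> : dgen (relab s G) = fmap (relab s) (dgen G) by rewrite subrr.
  rewrite /dgen /fmap -map_comp /=; apply/eq_in_map => j _ /=.
  by rewrite relab_contract.
Qed.

Lemma iso_perm g n (A : 'I_n -> rat) (s : 'S_n) : complex_iso g A (fun i => A (s i)).
Proof.
exists (fun G => fgen (relab s G)), (fun G => fgen (relab s^-1 G)); split.
- by apply: chain_relab => G; exact: relab_stable.
- apply: chain_relab => G /(relab_stable s^-1); apply: stable_ext => i /=.
  by rewrite permKV.
- move=> k G [[[_ _ _ [slg _] _] _ _] _]; apply: inR0 => H.
  by rewrite coef_fsub flift_fgen /fmap /= relabK // subrr.
- move=> k G [[[_ _ _ [slg _] _] _ _] _]; apply: inR0 => H.
  by rewrite coef_fsub flift_fgen /fmap /= relabKV // subrr.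
Qed.

Local Open Scope classical_set_scope.

Lemma sum_cont n (S : {set 'I_n}) :
  continuous (fun x : 'rV[realR]_n => \sum_(i in S) x ord0 i).
Proof.
move=> x.
rewrite /=.
elim: (index_enum _) => [|i r IH].
  under [X in continuous_at _ X]funext => y do rewrite big_nil.
  exact: cst_continuous.
under [X in continuous_at _ X]funext => y do rewrite big_cons.
case: (i \in S).
  exact: (cvgD (@coord_continuous _ 1 n ord0 i x) IH).
exact: IH.
Qed.

Lemma chamber_sign g n (C : set 'rV[realR]_n) (x y : 'rV[realR]_n) (S : {set 'I_n}) :
  connected C -> C `<=` @chamber_region g n -> C x -> C y -> (2 <= #|S|)%N ->
  1 < \sum_(i in S) x ord0 i -> 1 < \sum_(i in S) y ord0 i.
Proof.
move=> cC sC Cx Cy S2 lx.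
set f := fun z : 'rV[realR]_n => \sum_(i in S) z ord0 i.
have fc := @sum_cont n S.
have HB : C `&` (f @^-1` [set r | 1 < r]) = C.
apply: cC.
- by exists x.
- exists (f @^-1` [set r | 1 < r]) => //.
  apply: open_comp; last exact: open_gt.
  by move=> z _; exact: fc.
- exists (f @^-1` [set r | 1 <= r]).
    apply: preimage_closed; last exact: closed_ge.
    by move=> z _; exact: fc.
  apply/seteqP; split => z [Cz /= hz]; split => //.
    exact: ltW.
  rewrite lt_neqAle hz andbT eq_sym.
  apply/eqP => h; case: (sC z Cz) => _; apply.
  by exists S; split.
by have := congr1 (fun P => P y) HB; rewrite propeqE => -[_ /(_ Cy) []].
Qed.

Lemma wpt_perm n (A : 'I_n -> rat) (s : 'S_n) : perm_pt s (wpt A) = wpt (fun i => A (s i)).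
Proof. by apply/matrixP => i j; rewrite !mxE. Qed.

Lemma sum_wpt n (A : 'I_n -> rat) (S : {set 'I_n}) :
  \sum_(i in S) (wpt A) ord0 i = ratr (\sum_(i in S) A i).
Proof. by rewrite rmorph_sum; apply: eq_bigr => i _; rewrite mxE. Qed.

Lemma chamber_stable g n (A B : 'I_n -> rat) (C : set 'rV[realR]_n) : (1 <= g)%N ->
  (forall i, 0 < A i <= 1) -> (forall i, 0 < B i <= 1) ->
  connected C -> C `<=` @chamber_region g n -> C (wpt A) -> C (wpt B) ->
  forall G, stable g A G -> stable g B G.
Proof.
move=> g1 hA hB cC sC CA CB G; apply: stable_transfer => // S S2 h1.
have := chamber_sign cC sC CA CB S2.
have e1 : (1 : realR) = ratr 1 by rewrite rmorph1.
by rewrite !sum_wpt e1 !ltr_rat; apply.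
Qed.

Theorem mainTheorem7 (g n : nat) (A B : 'I_n -> rat) :
  (1 <= g)%N -> (1 <= n)%N -> weight_datum g A -> weight_datum g B ->
  [/\ wle A B -> subcomplex g A B,
      @chamber_region g n (wpt A) -> @chamber_region g n (wpt B) ->
        chamber_of g A = chamber_of g B -> same_complex g A B,
      (exists s : 'S_n, forall i, B i = A (s i)) -> complex_iso g A B &
      @chamber_region g n (wpt A) -> @chamber_region g n (wpt B) ->
        (exists s : 'S_n, perm_set s (chamber_of g A) = chamber_of g B) ->
        complex_iso g A B].
Proof.
move=> g1 n1 [hA _] [hB _]; split.
- exact: part1.
- move=> rA rB eC; apply: same_ext => G.
  have cC := @component_connected _ (@chamber_region g n) (wpt A).
  have sC := @connected_component_sub _ (@chamber_region g n) (wpt A).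
  have CA : chamber_of g A (wpt A) by exact: connected_component_refl.
  have CB : chamber_of g A (wpt B) by rewrite eC; exact: connected_component_refl.
  split; [exact: (chamber_stable g1 hA hB cC sC CA CB)|
         exact: (chamber_stable g1 hB hA cC sC CB CA)].
- case=> s hs; have -> : B = (fun i => A (s i)) by apply/funext.
  exact: iso_perm.
- move=> rA rB [s hs].
  apply: (iso_ext _ (iso_perm g A s)) => G.
  have cC := @component_connected _ (@chamber_region g n) (wpt B).
  have sC := @connected_component_sub _ (@chamber_region g n) (wpt B).
  have CB : chamber_of g B (wpt B) by exact: connected_component_refl.
  have CA : chamber_of g B (wpt (fun i => A (s i))).
    rewrite -wpt_perm -hs; exists (wpt A) => //; exact: connected_component_refl.
  have hA' : forall i, 0 < A (s i) <= 1 by move=> i; exact: hA.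
  split; [exact: (chamber_stable g1 hA' hB cC sC CA CB)|
         exact: (chamber_stable g1 hB hA' cC sC CB CA)].
Qed.
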